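(* Suppose $p_{XY}$ has full support on $\mathcal{X}\times\mathcal{Y}$ and there exists a joint p.m.f. $p(u,x,y,z)=p_{XY}(x,y)p_{Z|XY}(z|x,y)p(u|x,y,z)$ (with $U$ on a finite set) satisfying the Markov chains $U-X-Y$, $Z-(U,Y)-X$ and $U-(Y,Z)-X$. Then for all $y,y'\in\mathcal{Y}$, $k(y)=k(y')$ and $\{\vec\alpha_1^{(y)},\dots,\vec\alpha_{k(y)}^{(y)}\}=\{\vec\alpha_1^{(y')},\dots,\vec\alpha_{k(y')}^{(y')}\}$.
   Context: $\mathcal{X},\mathcal{Y},\mathcal{Z}$ are finite. For $y\in\mathcal{Y}$ let $\mathcal{Z}^{(y)}=\{z\in\mathcal{Z}:\exists x,\ p_{Z|XY}(z|x,y)>0\}$. For $z,z'\in\mathcal{Z}^{(y)}$, write $z\equiv_y z'$ if the column vectors $(p_{Z|XY}(z|x,y))_{x\in\mathcal{X}}$ and $(p_{Z|XY}(z'|x,y))_{x\in\mathcal{X}}$ are positive scalar multiples of each other; this is an equivalence relation partitioning $\mathcal{Z}^{(y)}=\mathcal{Z}_1^{(y)}\uplus\cdots\uplus\mathcal{Z}_{k(y)}^{(y)}$. For each class, the $|\mathcal{X}|\times|\mathcal{Z}_i^{(y)}|$ matrix $A_i^{(y)}(x,z)=p_{Z|XY}(z|x,y)$ is rank one and can be uniquely written as $A_i^{(y)}(x,z)=\vec\alpha_i^{(y)}(x)\vec\gamma_i^{(y)}(z)$ with $\vec\alpha_i^{(y)}$ a probability vector on $\mathcal{X}$. *)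

(* Defs.v *)
From HB Require Import structures.
From mathcomp Require Import all_boot all_order all_algebra.
From Stdlib Require Import ClassicalEpsilon.
Set Implicit Arguments. Unset Strict Implicit. Unset Printing Implicit Defensive.
Import Order.TTheory GRing.Theory Num.Theory.
Local Open Scope ring_scope.

Definition pbool (P : Prop) : bool :=
  if excluded_middle_informative P then true else false.

Definition prob_vec (R : realFieldType) (T : finType) (a : T -> R) : Prop :=
  (forall t, 0 <= a t) /\ \sum_t a t = 1.

(* Markov chain A - B - C for a (joint) p.m.f. q on A x B x C:
   p(a,b,c) p(b) = p(a,b) p(b,c) *)
Definition markov (R : realFieldType) (A B C : finType) (q : A -> B -> C -> R) : Prop :=
  forall a b c,
    q a b c * (\sum_(a' : A) \sum_(c' : C) q a' b c')
    = (\sum_(c' : C) q a b c') * (\sum_(a' : A) q a' b c).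

Section Classes.
Variables (R : realFieldType) (X Y Z : finType) (W : X -> Y -> Z -> R).
(* W x y z = p_{Z|XY}(z|x,y) *)

Definition Zsupp (y : Y) : {set Z} := [set z | [exists x, W x y z > 0]].

Definition zequiv (y : Y) (z z' : Z) : Prop :=
  exists c : R, 0 < c /\ forall x, W x y z = c * W x y z'.

Definition zclasses (y : Y) : {set {set Z}} :=
  [set [set z' in Zsupp y | pbool (zequiv y z z')] | z in Zsupp y].

Definition kcl (y : Y) : nat := #|zclasses y|.

Definition is_alpha (y : Y) (C : {set Z}) (a : X -> R) : Prop :=
  prob_vec a /\ exists gamma : Z -> R, forall x, forall z, z \in C -> W x y z = a x * gamma z.

Definition alpha_set (y : Y) (a : X -> R) : Prop :=
  exists2 C, C \in zclasses y & is_alpha y C a.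
End Classes.

(* Main.v *)
Require Import Defs.
From HB Require Import structures.
From mathcomp Require Import all_boot all_order all_algebra.
From Stdlib Require Import ClassicalEpsilon.
From mathcomp Require Import ring lra.
Import Order.TTheory GRing.Theory Num.Theory.
Local Open Scope ring_scope.
Lemma pboolP (P : Prop) : pbool P <-> P.
Proof. rewrite /pbool; case: excluded_middle_informative => //. Qed.

Lemma pbool_eq (P Q : Prop) : (P <-> Q) -> pbool P = pbool Q.
Proof.
move=> [h1 h2]; rewrite /pbool.
case: excluded_middle_informative; case: excluded_middle_informative => //.
- by move=> nq p; case: nq; apply: h1.
- by move=> q np; case: np; apply: h2.
Qed.

Definition propto (R : realFieldType) (X : finType) (f h : X -> R) : Prop :=
  exists c : R, 0 < c /\ forall x, f x = c * h x.
Arguments propto {R X}.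

Lemma propto_refl (R : realFieldType) (X : finType) (f : X -> R) : propto f f.
Proof. by exists 1; split => // x; rewrite mul1r. Qed.

Lemma propto_sym (R : realFieldType) (X : finType) (f h : X -> R) :
  propto f h -> propto h f.
Proof.
move=> [c [c0 e]]; exists c^-1; split; first by rewrite invr_gt0.
by move=> x; rewrite e mulrA mulVf ?mul1r // gt_eqF.
Qed.

Lemma propto_trans (R : realFieldType) (X : finType) (f g h : X -> R) :
  propto f g -> propto g h -> propto f h.
Proof.
move=> [c [c0 e]] [d [d0 e']]; exists (c * d); split; first exact: mulr_gt0.
by move=> x; rewrite e e' mulrA.
Qed.

Arguments propto_refl {R X}.
Arguments propto_sym {R X f h}.
Arguments propto_trans {R X f g h}.

Lemma term_le_sum (R : realFieldType) (I : finType) (F : I -> R) (i : I) :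
  (forall j, 0 <= F j) -> F i <= \sum_j F j.
Proof.
move=> h; rewrite (bigD1 i) //= lerDl; exact: sumr_ge0.
Qed.

Lemma exists_pos (R : realFieldType) (I : finType) (F : I -> R) :
  0 < \sum_i F i -> exists i, 0 < F i.
Proof.
case: (boolP [exists i, 0 < F i]) => [/existsP //|/existsPn h] s.
have : \sum_i F i <= \sum_(i : I) (0:R).
  by apply: ler_sum => i _; rewrite leNgt h.
rewrite big1_eq.
by rewrite leNgt s.
Qed.

Arguments exists_pos {R I F}.

Lemma card_imset_eq (Z T : finType) (A : {set Z}) (f g : Z -> {set T}) :
  (forall z1 z2, z1 \in A -> z2 \in A -> (f z1 = f z2 <-> g z1 = g z2)) ->
  #|f @: A| = #|g @: A|.
Proof.
have main : forall (f g : Z -> {set T}),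
  (forall z1 z2, z1 \in A -> z2 \in A -> (f z1 = f z2 <-> g z1 = g z2)) ->
  (#|g @: A| <= #|f @: A|)%N.
  move=> f' g' H.
  pose h C := if [pick z in A | f' z == C] is Some z then g' z else set0.
  have -> : g' @: A = h @: (f' @: A).
    apply/setP => C; apply/imsetP/imsetP.
    - move=> [z zA ->]; exists (f' z); first exact: imset_f.
      rewrite /h; case: pickP => [z' /andP [z'A /eqP e]|/(_ z)]; last by rewrite zA eqxx.
      by apply/(H _ _ zA z'A).
    - move=> [C' /imsetP [z zA ->] ->]; rewrite /h.
      case: pickP => [z' /andP [z'A /eqP e]|/(_ z)]; last by rewrite zA eqxx.
      by exists z'.
  exact: leq_imset_card.
move=> H; apply/eqP; rewrite eqn_leq; apply/andP; split; apply: main => //.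
by move=> z1 z2 h1 h2; split => /(H _ _ h1 h2).
Qed.

Lemma matching (R : realFieldType) (X Y Z U : finType)
  (pXY : X -> Y -> R) (W : X -> Y -> Z -> R) (V : X -> Y -> Z -> U -> R) :
  (forall x y, 0 < pXY x y) ->
  (forall x y z, 0 <= W x y z) ->
  (forall x y, \sum_(z : Z) W x y z = 1) ->
  (forall x y z u, 0 <= V x y z u) ->
  (forall x y z, \sum_(u : U) V x y z u = 1) ->
  let P := fun u x y z => pXY x y * W x y z * V x y z u in
  markov (fun (u : U) (x : X) (y : Y) => \sum_(z : Z) P u x y z) ->
  markov (fun (z : Z) (uy : U * Y) (x : X) => P uy.1 x uy.2 z) ->
  markov (fun (u : U) (yz : Y * Z) (x : X) => P u x yz.1 yz.2) ->
  forall y y' z, z \in Zsupp W y ->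
  exists2 z', z' \in Zsupp W y' & propto (fun x => W x y z) (fun x => W x y' z').
Proof.
move=> p0 W0 W1 V0 V1 P M1 M2 M3.
pose g u x y := \sum_z W x y z * V x y z u.
have P0 : forall u x y z, 0 <= P u x y z.
  by move=> u x y z; rewrite /P !mulr_ge0 // ltW.
have sumzP : forall u x y, \sum_z P u x y z = pXY x y * g u x y.
  by move=> u x y; rewrite /g mulr_sumr; apply: eq_bigr => z _; rewrite /P mulrA.
have sumuP : forall x y z, \sum_u P u x y z = pXY x y * W x y z.
  by move=> x y z; rewrite /P -mulr_sumr V1 mulr1.
have sumuzP : forall x y, \sum_u \sum_z P u x y z = pXY x y.
  move=> x y; rewrite exchange_big /=.
  under eq_bigr do rewrite sumuP.
  by rewrite -mulr_sumr W1 mulr1.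
have gind : forall u x y y', g u x y = g u x y'.
  move=> u x y y'.
  have px0 : 0 < \sum_y'' pXY x y''.
    apply: (lt_le_trans (p0 x y)); apply: term_le_sum => j; exact: ltW.
  have key : forall y1, g u x y1 * (\sum_y'' pXY x y'') = \sum_y'' \sum_z P u x y'' z.
    move=> y1; have := M1 u x y1; rewrite /=.
    rewrite sumzP sumuzP exchange_big /=.
    under eq_bigr do rewrite sumuzP.
    move=> e; apply: (mulfI (lt0r_neq0 (p0 x y1))); rewrite mulrA e mulrC //.
  apply: (mulIf (lt0r_neq0 px0)); by rewrite !key.
have key : forall u y z, 0 < \sum_x P u x y z ->
    propto (fun x => W x y z) (fun x => g u x y).
  move=> u y z T0.
  have SS0 : 0 < \sum_z' \sum_x' P u x' y z'.
    apply: (lt_le_trans T0); apply: (@term_le_sum _ _ (fun zz => \sum_x0 P u x0 y zz) z).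
    by move=> j; apply: sumr_ge0.
  have NN0 : 0 < \sum_u' \sum_x' P u' x' y z.
    apply: (lt_le_trans T0); apply: (@term_le_sum _ _ (fun uu => \sum_x0 P uu x0 y z) u).
    by move=> j; apply: sumr_ge0.
  exists ((\sum_u' \sum_x' P u' x' y z) / (\sum_z' \sum_x' P u x' y z')).
  split; first exact: divr_gt0.
  move=> x.
  have e2 := M2 z (u, y) x; have e3 := M3 u (y, z) x; simpl in e2, e3.
  rewrite sumzP in e2; rewrite sumuP in e3.
  have h : (\sum_x P u x y z) * (pXY x y * W x y z) * (\sum_z' \sum_x' P u x' y z')
         = (\sum_x P u x y z) * (pXY x y * g u x y) * (\sum_u' \sum_x' P u' x' y z).
    by rewrite -e2 -e3 mulrAC.
  have Tn := lt0r_neq0 T0; have Sn := lt0r_neq0 SS0; have pn := lt0r_neq0 (p0 x y).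
  move: h; set T := \sum_x P u x y z; set S := \sum_z' _; set N := \sum_u' _.
  set w := W x y z; set gg := g u x y; set pp := pXY x y.
  move=> h.
  have -> : w = T * (pp * w) * S / (T * pp * S) by field; rewrite ?Tn ?Sn ?pn.
  by rewrite h; field; rewrite ?Tn ?Sn ?pn.
move=> y y' z zS.
have [x0 Wx0] : exists x0, 0 < W x0 y z by move: zS; rewrite inE => /existsP.
have : 0 < \sum_u \sum_x P u x y z.
  rewrite exchange_big /=; under eq_bigr do rewrite sumuP.
  apply: (lt_le_trans _ (@term_le_sum _ _ (fun x => pXY x y * W x y z) x0 _)).
    exact: mulr_gt0.
  by move=> j; apply: mulr_ge0 => //; apply: ltW.
move/exists_pos => [u Tu].
have pr1 := key u y z Tu.
have [x1 Px1] := exists_pos Tu.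
have gx1 : 0 < g u x1 y'.
  rewrite -(gind u x1 y y').
  apply: (lt_le_trans _ (@term_le_sum _ _ (fun zz => W x1 y zz * V x1 y zz u) z _)).
    by move: Px1; rewrite /P -mulrA pmulr_rgt0.
  by move=> j; apply: mulr_ge0.
have [z' WVz'] := exists_pos gx1.
have Wz' : 0 < W x1 y' z'.
  move: WVz'; have := W0 x1 y' z'; rewrite le_eqVlt => /orP [/eqP <-|//].
  by rewrite mul0r ltxx.
have Tu' : 0 < \sum_x P u x y' z'.
  apply: (lt_le_trans _ (@term_le_sum _ _ (fun xx => P u xx y' z') x1 _)); last by move=> j; apply: P0.
  by rewrite /P -mulrA pmulr_rgt0.
exists z'; first by rewrite inE; apply/existsP; exists x1.
have pr2 := key u y' z' Tu'.
apply: (propto_trans pr1); apply: propto_sym.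
move: pr2 => [c [c0 e]]; exists c; split => // x; by rewrite e (gind u x y' y).
Qed.

Theorem claim2 (R : realFieldType) (X Y Z U : finType)
  (pXY : X -> Y -> R) (W : X -> Y -> Z -> R) (V : X -> Y -> Z -> U -> R) :
  (forall x y, 0 < pXY x y) ->
  \sum_(x : X) \sum_(y : Y) pXY x y = 1 ->
  (forall x y z, 0 <= W x y z) ->
  (forall x y, \sum_(z : Z) W x y z = 1) ->
  (forall x y z u, 0 <= V x y z u) ->
  (forall x y z, \sum_(u : U) V x y z u = 1) ->
  let P := fun u x y z => pXY x y * W x y z * V x y z u in
  markov (fun (u : U) (x : X) (y : Y) => \sum_(z : Z) P u x y z) ->
  markov (fun (z : Z) (uy : U * Y) (x : X) => P uy.1 x uy.2 z) ->
  markov (fun (u : U) (yz : Y * Z) (x : X) => P u x yz.1 yz.2) ->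
  forall y y' : Y,
    kcl W y = kcl W y' /\
    (forall a : X -> R, alpha_set W y a <-> alpha_set W y' a).
Proof.
move=> p0 psum W0 W1 V0 V1 P M1 M2 M3.
have mt := @matching _ _ _ _ _ _ _ _ p0 W0 W1 V0 V1 M1 M2 M3.
pose cls y z := [set z' in Zsupp W y | pbool (zequiv W y z z')].
have clsE : forall y, zclasses W y = [set cls y z | z in Zsupp W y] by [].
have cls_eq : forall y z1 z2, z1 \in Zsupp W y -> z2 \in Zsupp W y ->
    (cls y z1 = cls y z2 <-> propto (fun x => W x y z1) (fun x => W x y z2)).
  move=> y z1 z2 z1S z2S; split.
  - move=> e; have : z2 \in cls y z2.
      by rewrite inE z2S /=; apply/pboolP; apply: propto_refl.
    by rewrite -e inE => /andP [_ /pboolP].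
  - move=> h; apply/setP => z; rewrite !inE; congr (_ && _); apply: pbool_eq.
    split => h'.
    + exact: (propto_trans (propto_sym h) h').
    + exact: (propto_trans h h').
move=> y y'; split.
- pose m z := if [pick z' in Zsupp W y' | pbool (propto (fun x => W x y z) (fun x => W x y' z'))]
      is Some z' then z' else z.
  have mP : forall z, z \in Zsupp W y ->
      m z \in Zsupp W y' /\ propto (fun x => W x y z) (fun x => W x y' (m z)).
    move=> z zS; rewrite /m; case: pickP => [z' /andP [z'S /pboolP h] // | none].
    exfalso; have [z' z'S h] := mt y y' z zS; have := none z'; rewrite z'S /=.
    have -> // : pbool (propto (fun x => W x y z) (fun x => W x y' z')) = true.
    by apply/pboolP.
  rewrite /kcl clsE.
  transitivity #|[set cls y' (m z) | z in Zsupp W y]|.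
    apply: (@card_imset_eq _ _ _ (fun z => cls y z) (fun z => cls y' (m z))).
    move=> z1 z2 z1S z2S.
    have [m1S h1] := mP z1 z1S; have [m2S h2] := mP z2 z2S.
    rewrite (cls_eq y z1 z2 z1S z2S) (cls_eq y' (m z1) (m z2) m1S m2S).
    split => h.
    + exact: (propto_trans (propto_sym h1) (propto_trans h h2)).
    + exact: (propto_trans h1 (propto_trans h (propto_sym h2))).
  rewrite clsE; apply: eq_card => C; apply/imsetP/imsetP.
  + move=> [z zS ->]; exists (m z) => //; exact: (mP z zS).1.
  + move=> [z' z'S ->].
    have [z zS h] := mt y' y z' z'S.
    exists z => //.
    have [mS hm] := mP z zS.
    by apply/(cls_eq y' z' (m z) z'S mS); apply: (propto_trans h hm).
- have achar : forall y a, alpha_set W y a <->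
      prob_vec a /\ exists2 z, z \in Zsupp W y & exists c, forall x, W x y z = a x * c.
    move=> y1 a; split.
    + move=> [C /imsetP [z zS ->] [pa [ga hga]]]; split => //; exists z => //.
      exists (ga z) => x; apply: hga; rewrite inE zS /=; apply/pboolP; apply: propto_refl.
    + move=> [pa [z zS [c hc]]]; exists (cls y1 z); first exact: imset_f.
      split => //; exists (fun z' => \sum_x W x y1 z') => x z'.
      rewrite inE => /andP [z'S /pboolP [d [d0 hd]]].
      have dn := lt0r_neq0 d0.
      have e : forall x, W x y1 z' = a x * (d^-1 * c).
        by move=> x'; apply: (mulfI dn); rewrite -hd hc; field; rewrite ?dn.
      rewrite (eq_bigr _ (fun x _ => e x)) -mulr_suml pa.2 mul1r; exact: e.
  have dir : forall y1 y2 a, alpha_set W y1 a -> alpha_set W y2 a.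
    move=> y1 y2 a /achar [pa [z zS [c hc]]]; apply/achar; split => //.
    have [z' z'S [d [d0 hd]]] := mt y1 y2 z zS.
    have dn := lt0r_neq0 d0.
    exists z' => //; exists (d^-1 * c) => x.
    by apply: (mulfI dn); rewrite -hd hc; field; rewrite ?dn.
  by move=> a; split; apply: dir.
Qed.
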